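(* Let $q=2v+1$ be a prime power with $v$ odd, and suppose there exists an $(\mathbb F_q^\Box,k;n)$ Heffter difference packing $\mathcal F$. Then there exists a $\left(\frac{q-1}{2},k;kn\right)$ Heffter configuration on the point set $\mathbb F_q^\Box$; if every member of $\mathcal F$ admits an ordering whose partial sums are pairwise distinct, then this configuration can be taken so that each block admits such an ordering. Moreover, this configuration can be extended by one further parallel class consisting of blocks of size $\frac{q-1}{2k}$, yielding a Heffter space on $\mathbb F_q^\Box$ with $kn$ parallel classes of block size $k$ and one parallel class of block size $\frac{q-1}{2k}$.
   Context: $\mathbb F_q^\Box$ denotes the multiplicative group of nonzero squares of $\mathbb F_q$; for $q\equiv3\pmod4$ it is a half-set of the additive group of $\mathbb F_q$ (it contains exactly one of $g,-g$ for each $g\ne0$). Fix a group isomorphism $\phi:\mathbb F_q^\Box\to\mathbb Z_v$. An $(\mathbb F_q^\Box,k;n)$ Heffter difference packing is a family $\{B_1,\dots,B_n\}$ of $k$-subsets of $\mathbb F_q^\Box$ such that: the multiset of all differences $a-b$, with $(a,b)$ an ordered pair of distinct elements of a common $\phi(B_i)$, over all $i$, has no repeated element; $k$ divides $v$ and the elements of each $\phi(B_i)$ are pairwise distinct modulo $k$; and each $B_i$ sums to $0$ in $\mathbb F_q$. A $(v,k)$ Heffter system on a half-set $V$ is a partition of $V$ into blocks of size $k$ each summing to $0$. A Heffter space is a partial linear space (any two points in at most one block) on a half-set $V$ with a resolution into parallel classes (partitions of $V$), each a Heffter system; a $(v,k;r)$ Heffter configuration is a Heffter space with $v$ points and $r$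 parallel classes all of block size $k$. *)

(* Defs.v *)
From HB Require Import structures.
From mathcomp Require Import all_boot all_order all_algebra.
Set Implicit Arguments. Unset Strict Implicit. Unset Printing Implicit Defensive.
Import GRing.Theory.
Local Open Scope ring_scope.

Section Heffter.
Variable F : finFieldType.

Definition nzsq : {set F} := [set x : F | (x != 0) && [exists y : F, y ^+ 2 == x]].

(* phi : F_q^Box -> Z_v, with Z_v encoded as {0,..,v-1} (nat) with addition mod v;
   phi is a group isomorphism (multiplicative to additive). *)
Definition sq_iso (v : nat) (phi : F -> nat) : Prop :=
  [/\ {in nzsq, forall x, (phi x < v)%N},
      {in nzsq &, injective phi},
      (forall m : nat, (m < v)%N -> exists2 x, x \in nzsq & phi x = m)
    & {in nzsq &, forall x y : F, phi (x * y) = ((phi x + phi y) %% v)%N}].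

Definition zdiff (v : nat) (phi : F -> nat) (a b : F) : nat := ((phi a + v - phi b) %% v)%N.

Definition heffter_diff_packing (v : nat) (phi : F -> nat) (k n : nat)
  (B : 'I_n -> {set F}) : Prop :=
  [/\ (forall i, B i \subset nzsq /\ #|B i| = k),
      (forall (i j : 'I_n) (a b c d : F),
          a \in B i -> b \in B i -> a != b ->
          c \in B j -> d \in B j -> c != d ->
          zdiff v phi a b = zdiff v phi c d -> [/\ i = j, a = c & b = d]),
      (k %| v)%N,
      (forall i, {in B i &, forall a b, phi a %% k = phi b %% k -> a = b}%N)
    & (forall i, \sum_(x in B i) x = 0)].

Definition half_set (V : {set F}) : Prop :=
  0 \notin V /\ forall g : F, g != 0 -> (g \in V) != (- g \in V).

Definition heffter_system (V : {set F}) (k : nat) (P : {set {set F}}) : Prop :=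
  partition P V /\ {in P, forall b : {set F}, #|b| = k /\ \sum_(x in b) x = 0}.

Definition heffter_space (V : {set F}) (m : nat) (C : 'I_m -> {set {set F}}) : Prop :=
  [/\ half_set V,
      (forall j, exists k, heffter_system V k (C j))
    & (forall (i j : 'I_m) (b1 b2 : {set F}) (x y : F),
         b1 \in C i -> b2 \in C j -> x != y ->
         x \in b1 -> y \in b1 -> x \in b2 -> y \in b2 -> i = j /\ b1 = b2)].

Definition heffter_config (V : {set F}) (vv k r : nat) (C : 'I_r -> {set {set F}}) : Prop :=
  [/\ #|V| = vv, heffter_space V C & forall j, heffter_system V k (C j)].

Definition simple_block (b : {set F}) : Prop :=
  exists s : seq F, [/\ uniq s, [set x in s] = b &
    uniq [seq \sum_(x <- take i s) x | i <- iota 1 (size s)]].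

Definition add_class (m : nat) (C : 'I_m -> {set {set F}}) (Q : {set {set F}})
  (j : 'I_m.+1) : {set {set F}} :=
  if unlift ord_max j is Some j' then C j' else Q.

End Heffter.

(* Main.v *)
Require Import Defs.
From HB Require Import structures.
From mathcomp Require Import all_boot all_order all_algebra all_fingroup all_solvable zify.
Set Implicit Arguments. Unset Strict Implicit. Unset Printing Implicit Defensive.
Import GRing.Theory.
Local Open Scope ring_scope.

Section S.
Variable F : finFieldType.

Lemma nzsqP (x : F) : reflect (x != 0 /\ exists y, y ^+ 2 = x) (x \in nzsq F).
Proof.
rewrite inE; apply: (iffP andP) => [[-> /existsP[y /eqP]]|[-> [y Hy]]]; first by eauto.
by split=> //; apply/existsP; exists y; rewrite Hy.
Qed.

Lemma sq_neq0 (x : F) : x \in nzsq F -> x != 0.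
Proof. by case/nzsqP. Qed.

Lemma sqM (x y : F) : x \in nzsq F -> y \in nzsq F -> x * y \in nzsq F.
Proof.
case/nzsqP=> x0 [a ax]; case/nzsqP=> y0 [b bx]; apply/nzsqP; split.
  exact: mulf_neq0.
by exists (a * b); rewrite exprMn ax bx.
Qed.

Lemma sqV (x : F) : x \in nzsq F -> x^-1 \in nzsq F.
Proof.
case/nzsqP=> x0 [a ax]; apply/nzsqP; split; first by rewrite invr_neq0.
by exists a^-1; rewrite exprVn ax.
Qed.

Lemma sq1 : (1 : F) \in nzsq F.
Proof. by apply/nzsqP; split; [exact: oner_neq0 | exists 1; rewrite expr1n]. Qed.

Lemma sqX (x : F) : x != 0 -> x ^+ 2 \in nzsq F.
Proof. by move=> x0; apply/nzsqP; split; [rewrite expf_neq0 | exists x]. Qed.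

Lemma char_card : (#|F|%:R : F) = 0.
Proof.
have := @expg_cardG _ [set: F]%g (GRing.one F) (in_setT _).
by rewrite FinRing.zmodXgE cardsT.
Qed.

End S.

Lemma modn_small2 v x : (x < 2 * v)%N -> (x %% v = if x < v then x else x - v)%N.
Proof.
case: ifP => h; first by rewrite modn_small.
move=> h2; have -> : x = (x - v + v)%N by lia.
by rewrite modnDr modn_small //; lia.
Qed.

Section P.
Variables (F : finFieldType) (v : nat) (phi : F -> nat).
Hypothesis Hiso : sq_iso v phi.

Lemma phi_lt x : x \in nzsq F -> (phi x < v)%N.
Proof. by case: Hiso => h _ _ _; apply: h. Qed.

Lemma phi_inj : {in nzsq F &, injective phi}.
Proof. by case: Hiso. Qed.

Lemma phiM x y : x \in nzsq F -> y \in nzsq F -> phi (x * y) = ((phi x + phi y) %% v)%N.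
Proof. by case: Hiso => _ _ _ h; apply: h. Qed.

Lemma phiMc x y : x \in nzsq F -> y \in nzsq F ->
  phi (x * y) = if (phi x + phi y < v)%N then (phi x + phi y)%N else (phi x + phi y - v)%N.
Proof.
move=> hx hy; rewrite phiM // modn_small2 //.
by have := phi_lt hx; have := phi_lt hy; lia.
Qed.

Lemma v_gt0 : (0 < v)%N.
Proof. by have := phi_lt (sq1 F); lia. Qed.

Lemma phi1 : phi 1 = 0%N.
Proof.
have := phiMc (sq1 F) (sq1 F); rewrite mulr1; have := phi_lt (sq1 F).
by case: ifP => _; lia.
Qed.

Definition psi (m : nat) : F := odflt 0 [pick x in nzsq F | phi x == m].

Lemma psiP m : (m < v)%N -> psi m \in nzsq F /\ phi (psi m) = m.
Proof.
case: Hiso => _ _ hs _ /hs [x hx hpx]; rewrite /psi.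
case: pickP => [y /andP[hy /eqP hpy]|/(_ x)] /=; first by [].
by rewrite hx hpx eqxx.
Qed.

Lemma psi_phi x : x \in nzsq F -> psi (phi x) = x.
Proof.
move=> hx; have [h1 h2] := psiP (phi_lt hx).
exact: phi_inj.
Qed.

Lemma zdiffE a b : a \in nzsq F -> b \in nzsq F ->
  zdiff v phi a b = if (phi b <= phi a)%N then (phi a - phi b)%N else (phi a + v - phi b)%N.
Proof.
move=> ha hb; rewrite /zdiff modn_small2; have := phi_lt ha; have := phi_lt hb.
  by do 2 case: ifP => ?; lia.
by have := phi_lt ha; have := phi_lt hb; lia.
Qed.

Lemma zdiffM g a b : g \in nzsq F -> a \in nzsq F -> b \in nzsq F ->
  zdiff v phi (g * a) (g * b) = zdiff v phi a b.
Proof.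
move=> hg ha hb; have := phiMc hg ha; have := phiMc hg hb.
rewrite !zdiffE ?sqM //; move: (phi (g * a)) (phi (g * b)) => x y.
move: (phi_lt hg) (phi_lt ha) (phi_lt hb).
by do 4 case: ifP => ?; lia.
Qed.

Lemma card_nzsq : #|nzsq F| = v.
Proof.
have -> : nzsq F = [set psi (val m) | m : 'I_v].
  apply/setP=> x; apply/idP/imsetP => [hx|[m _ ->]].
    by exists (Ordinal (phi_lt hx)) => //=; rewrite psi_phi.
  by case: (psiP (ltn_ord m)).
rewrite card_imset ?card_ord // => m1 m2 /(congr1 phi).
by case: (psiP (ltn_ord m1)) => _ ->; case: (psiP (ltn_ord m2)) => _ -> /val_inj.
Qed.

Hypothesis Hodd : odd v.
Hypothesis Hcard : #|F| = (2 * v).+1.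

Lemma v_odd_eq : v = (2 * v./2).+1.
Proof. by rewrite -{1}(odd_double_half v) Hodd mul2n add1n. Qed.

Lemma m1_notin : (-1 : F) \notin nzsq F.
Proof.
apply/negP=> hm.
have := phiMc hm hm; rewrite mulrNN mulr1 phi1.
have := phi_lt hm; have := v_odd_eq; case: ifP => ? ; last by lia.
move=> _ _ h0; have : phi (-1) = phi 1 by rewrite phi1; lia.
move/phi_inj => /(_ hm (sq1 F)) h.
have := char_card F; rewrite Hcard -addn1 natrD natrM.
have -> : (2%:R : F) = 0 by rewrite -[2%N]/(1 + 1)%N natrD -{1}h addNr.
by rewrite mul0r add0r; apply/eqP; rewrite oner_eq0.
Qed.

Lemma not_both g : g \in nzsq F -> - g \in nzsq F -> False.
Proof.
move=> h1 h2; have := sqM h2 (sqV h1); rewrite mulNr mulfV ?sq_neq0 //.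
by move=> h; move: m1_notin; rewrite h.
Qed.

Lemma half_nzsq : half_set (nzsq F).
Proof.
split; first by apply/negP => /sq_neq0; rewrite eqxx.
move=> g g0; have hh := sqX g0; set m := phi (g ^+ 2).
have hm := phi_lt hh.
have hr : ((m * (v./2).+1) %% v < v)%N by rewrite ltn_mod v_gt0.
have [hs hps] := psiP hr; set s := psi _ in hs hps.
have hss : phi (s * s) = phi (g ^+ 2).
  rewrite phiM // hps modnDm -mulnDr addnn -mul2n mulnCA.
  have -> : (2 * (m * (v./2).+1) = m * v + m)%N by rewrite {2}v_odd_eq; nia.
  by rewrite modnMDl modn_small.
have : s * s = g ^+ 2 by apply: phi_inj => //; apply: sqM.
move/eqP; rewrite -expr2 -subr_eq0 subr_sqr mulf_eq0 subr_eq0 addr_eq0.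
case/orP => /eqP e.
  have : g \in nzsq F by rewrite -e.
  by move=> hg; rewrite hg; apply/negP => /(not_both hg).
have hg : - g \in nzsq F by rewrite -e.
rewrite hg; case: (g \in nzsq F) / idP => // h; case: (not_both h hg).
Qed.

End P.

Lemma cnt_card v (P : pred nat) : #|[set m : 'I_v | P (val m)]| = count P (iota 0 v).
Proof.
rewrite cardsE cardE /enum_mem size_filter -val_enum_ord count_map.
by rewrite enumT.
Qed.
Lemma count_mod k w s : (s < k)%N -> count (fun m => m %% k == s)%N (iota 0 (k * w)) = w.
Proof.
move=> sk; elim: w => [|w IH]; first by rewrite muln0.
rewrite mulnS addnC iotaD count_cat IH.
have -> : iota (0 + k * w) k = map (addn (k * w)) (iota 0 k) by rewrite -iotaDl addn0 add0n.
rewrite count_map.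
rewrite (@eq_in_count _ _ (pred1 s)) ?count_uniq_mem ?iota_uniq ?mem_iota ?sk ?addn1 //.
move=> j; rewrite mem_iota add0n => /= hj.
by rewrite mulnC modnMDl modn_small.
Qed.


Section Q.
Variables (F : finFieldType) (v : nat) (phi : F -> nat) (k n : nat) (B : 'I_n -> {set F}).
Hypothesis Hiso : sq_iso v phi.
Hypothesis Hodd : odd v.
Hypothesis Hcard : #|F| = (2 * v).+1.
Hypothesis Hn : (0 < n)%N.
Hypothesis Hpack : heffter_diff_packing v phi k B.

Lemma B_sub i : B i \subset nzsq F. Proof. by case: Hpack => h _ _ _ _; case: (h i). Qed.
Lemma B_card i : #|B i| = k. Proof. by case: Hpack => h _ _ _ _; case: (h i). Qed.
Lemma k_dvd : (k %| v)%N. Proof. by case: Hpack. Qed.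
Lemma B_res i : {in B i &, forall a b, phi a %% k = phi b %% k -> a = b}%N.
Proof. by case: Hpack => _ _ _ h _; apply: h. Qed.
Lemma B_sum i : \sum_(x in B i) x = 0. Proof. by case: Hpack. Qed.
Lemma B_diff (i j : 'I_n) (a b c d : F) :
  a \in B i -> b \in B i -> a != b -> c \in B j -> d \in B j -> c != d ->
  zdiff v phi a b = zdiff v phi c d -> [/\ i = j, a = c & b = d].
Proof. by case: Hpack => _ h _ _ _; apply: h. Qed.

Lemma B_in i x : x \in B i -> x \in nzsq F.
Proof. by move/(subsetP (B_sub i)). Qed.

Lemma k_gt0 : (0 < k)%N.
Proof.
have := k_dvd; have := v_gt0 Hiso; case: k => // _; rewrite dvd0n; lia.
Qed.

Lemma k_le_v : (k <= v)%N.
Proof. exact: dvdn_leq (v_gt0 Hiso) k_dvd. Qed.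

Lemma k_lt_v : (k < v)%N.
Proof.
rewrite ltn_neqAle k_le_v andbT; apply/eqP => kv.
pose i0 : 'I_n := Ordinal Hn.
have eB : B i0 = nzsq F.
  by apply/eqP; rewrite eqEcard B_sub B_card kv (card_nzsq Hiso) leqnn.
have [v1|v2] := leqP v 1.
  have : #|B i0| = 1%N by rewrite B_card kv; have := v_gt0 Hiso; lia.
  move/eqP/cards1P => [x ex]; have := B_sum i0; rewrite ex big_set1 => x0.
  by have := sq_neq0 (B_in (_ : x \in B i0)); rewrite ex set11 x0 eqxx => /(_ isT).
have [hg pg] := psiP Hiso v2; set g := psi phi 1 in hg pg.
have g1 : g != 1 by apply/eqP => e; move: pg; rewrite e (phi1 Hiso).
have a_in : 1 \in B i0 by rewrite eB sq1.
have b_in : g \in B i0 by rewrite eB.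
have c_in : g * 1 \in B i0 by rewrite eB sqM // sq1.
have d_in : g * g \in B i0 by rewrite eB sqM.
have ab : (1 : F) != g by rewrite eq_sym.
have cd : g * 1 != g * g.
  by apply: contra g1 => /eqP /(mulfI (sq_neq0 hg)) <-.
have := B_diff a_in b_in ab c_in d_in cd; rewrite zdiffM ?sq1 //.
by case=> // _ e _; rewrite mulr1 in e; rewrite -e eqxx in g1.
Qed.

Lemma phiMk c b : c \in nzsq F -> b \in nzsq F ->
  (phi (c * b)%R %% k = (phi c + phi b) %% k)%N.
Proof. by move=> hc hb; rewrite (phiM Hiso) // modn_dvdm // k_dvd. Qed.

Definition mulB (c : F) (A : {set F}) : {set F} := [set c * x | x in A].

Lemma mulB_card c A : c \in nzsq F -> #|mulB c A| = #|A|.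
Proof. by move=> hc; rewrite card_imset //; apply: mulfI; apply: sq_neq0. Qed.

Lemma mulB_sum c i : c \in nzsq F -> \sum_(x in mulB c (B i)) x = 0.
Proof.
move=> hc; rewrite big_imset /=; last by move=> x y _ _; apply: mulfI; apply: sq_neq0.
by rewrite -mulr_sumr B_sum mulr0.
Qed.

Lemma mulB_sub c i x : c \in nzsq F -> x \in mulB c (B i) -> x \in nzsq F.
Proof. by move=> hc /imsetP[y hy ->]; rewrite sqM // (B_in hy). Qed.

Lemma mulB_simple c A : c \in nzsq F -> simple_block A -> simple_block (mulB c A).
Proof.
move=> hc [s [us es ps]]; have inj : injective (fun x => c * x).
  by apply: mulfI; apply: sq_neq0.
exists (map (fun x => c * x) s); split.
- by rewrite map_inj_uniq.
- apply/setP=> x; rewrite inE -es; apply/mapP/imsetP => [[y hy ->]|[y hy ->]].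
    by exists y; rewrite ?inE.
  by exists y; rewrite ?inE in hy.
- rewrite size_map.
  have -> : [seq \sum_(x <- take i [seq c * x0 | x0 <- s]) x | i <- iota 1 (size s)] =
     map (fun x => c * x) [seq \sum_(x <- take i s) x | i <- iota 1 (size s)].
    rewrite -map_comp; apply: eq_map => i /=.
    by rewrite -map_take big_map mulr_sumr.
  by rewrite map_inj_uniq.
Qed.

Definition cls (i : 'I_n) (r : nat) : {set {set F}} :=
  [set mulB c (B i) | c in [set c in nzsq F | phi c %% k == r]%N].

Lemma B_onto i t : (t < k)%N -> exists2 b, b \in B i & (phi b %% k = t)%N.
Proof.
move=> tk; have kp := k_gt0.
pose f (b : F) : 'I_k := Ordinal (ltn_pmod (phi b) kp).
have hf : {in B i &, injective f}.
  by move=> a b ha hb /(congr1 val) /= e; exact: (B_res ha hb e).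
have : f @: B i = [set: 'I_k].
  apply/eqP; rewrite eqEcard subsetT cardsT card_ord card_in_imset // B_card leqnn //.
move/setP/(_ (Ordinal tk)); rewrite inE => /imsetP[b hb /(congr1 val) /= e].
by exists b.
Qed.

Lemma cls_system i r : (r < k)%N -> heffter_system (nzsq F) k (cls i r).
Proof.
move=> rk; have kp := k_gt0; split; last first.
  move=> b /imsetP[c]; rewrite inE => /andP[hc _] ->.
  by rewrite mulB_card // B_card mulB_sum.
apply/and3P; split.
- apply/eqP/setP=> x; apply/bigcupP/idP => [[b /imsetP[c]]|hx].
    by rewrite inE => /andP[hc _] -> /(mulB_sub hc).
  have [b hb eb] := B_onto i (ltn_pmod (phi x + (k - r)) kp).
  have hbn := B_in hb.
  have hc : x / b \in nzsq F by rewrite sqM // sqV.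
  exists (mulB (x / b) (B i)).
    apply/imsetP; exists (x / b) => //; rewrite inE hc /=.
    have e1 : x = x / b * b by rewrite divfK // sq_neq0.
    have := phiMk hc hbn; rewrite -e1 => e2.
    have : ((phi (x / b) + phi b) %% k = (r + phi b) %% k)%N.
      rewrite -e2 -modnDmr eb modnDmr.
      have -> : (r + (phi x + (k - r)) = phi x + k)%N by lia.
      by rewrite modnDr.
    by move/eqP; rewrite !(addnC _ (phi b)) eqn_modDl (modn_small rk) => /eqP ->.
  by apply/imsetP; exists b => //; rewrite divfK // sq_neq0.
- apply/trivIsetP => A1 A2 /imsetP[c1]; rewrite inE => /andP[hc1 /eqP r1] ->.
  move=> /imsetP[c2]; rewrite inE => /andP[hc2 /eqP r2] ->.
  apply: contraR; rewrite -setI_eq0 => /set0Pn[x]; rewrite inE.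
  case/andP => /imsetP[b1 hb1 ->] /imsetP[b2 hb2 e].
  have hb1n := B_in hb1; have hb2n := B_in hb2.
  have := phiMk hc1 hb1n; rewrite e phiMk // -modnDm r2 -r1 modnDm => /eqP.
  rewrite eqn_modDl => /eqP /(B_res hb2 hb1) eb; subst b2.
  have ec : c1 = c2 by apply: (mulIf (sq_neq0 hb1n)).
  by rewrite ec.
- apply/negP => /imsetP[c]; rewrite inE => /andP[hc _] e; have := congr1 (fun A : {set F} => #|A|) e.
  by rewrite mulB_card // B_card cards0; lia.
Qed.

Lemma mulB_pls c1 c2 i1 i2 x y : c1 \in nzsq F -> c2 \in nzsq F ->
  x \in mulB c1 (B i1) -> y \in mulB c1 (B i1) ->
  x \in mulB c2 (B i2) -> y \in mulB c2 (B i2) -> x != y -> i1 = i2 /\ c1 = c2.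
Proof.
move=> hc1 hc2 /imsetP[a1 ha1 ->] /imsetP[b1 hb1 ->] /imsetP[a2 ha2 e1] /imsetP[b2 hb2 e2] xy.
have ab1 : a1 != b1 by apply: contra xy => /eqP ->.
have ab2 : a2 != b2 by apply: contra xy; rewrite e1 e2 => /eqP ->.
have := zdiffM Hiso hc1 (B_in ha1) (B_in hb1); rewrite e1 e2 zdiffM ?(B_in ha2) ?(B_in hb2) //.
move=> ez; have [ei ea eb] := B_diff ha2 hb2 ab2 ha1 hb1 ab1 ez; subst.
by split => //; apply: (mulIf (sq_neq0 (B_in ha1))).
Qed.

Definition Qblk (s : nat) : {set F} := [set x in nzsq F | phi x %% k == s]%N.
Lemma QblkE s x : (x \in Qblk s) = (x \in nzsq F) && (phi x %% k == s)%N.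
Proof. by rewrite /Qblk in_set. Qed.

Definition Qcls : {set {set F}} := [set Qblk (val s) | s : 'I_k].

Lemma mulB_Q c i x y s : c \in nzsq F ->
  x \in mulB c (B i) -> y \in mulB c (B i) -> x \in Qblk s -> y \in Qblk s -> x != y -> False.
Proof.
move=> hc /imsetP[a ha ->] /imsetP[b hb ->]; rewrite !QblkE.
case/andP => _ /eqP e1 /andP[_ /eqP e2] xy.
move: e1; rewrite phiMk ?(B_in ha) // -e2 phiMk ?(B_in hb) // => /eqP.
rewrite eqn_modDl => /eqP /(B_res ha hb) eab.
by move: xy; rewrite eab eqxx.
Qed.

Lemma Qblk_card s : (s < k)%N -> #|Qblk s| = (v %/ k)%N.
Proof.
move=> sk.
have -> : Qblk s = [set psi phi (val m) | m in [set m : 'I_v | val m %% k == s]%N].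
  apply/setP=> x; rewrite inE; apply/andP/imsetP => [[hx hs]|[m]].
    by exists (Ordinal (phi_lt Hiso hx)); rewrite ?inE //= (psi_phi Hiso).
  rewrite inE => hm ->; have [h1 h2] := psiP Hiso (ltn_ord m).
  by rewrite h1 h2.
rewrite card_in_imset; last first.
  move=> m1 m2 _ _ /(congr1 phi).
  by case: (psiP Hiso (ltn_ord m1)) => _ ->; case: (psiP Hiso (ltn_ord m2)) => _ -> /val_inj.
rewrite (cnt_card v (fun m => m %% k == s)%N); have := k_dvd; rewrite dvdn_eq => /eqP {1}<-.
by rewrite mulnC count_mod.
Qed.

Lemma Qblk_sum s : \sum_(x in Qblk s) x = 0.
Proof.
have [hg pg] := psiP Hiso k_lt_v; set g := psi phi k in hg pg.
have g1 : g != 1 by apply/eqP => e; move: pg; rewrite e (phi1 Hiso) //; have := k_gt0; lia.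
have g0 := sq_neq0 hg.
have hm : forall x, (g * x \in Qblk s) = (x \in Qblk s).
  move=> x; rewrite !QblkE; case hx: (x \in nzsq F).
    by rewrite sqM //= phiMk // pg modnDl.
  case hgx: (g * x \in nzsq F) => //.
  by move: hx; rewrite -(mulKf g0 x) sqM // sqV.
set S := \sum_(x in Qblk s) x.
have eS : S = g * S.
  rewrite {1}/S (reindex_inj (mulfI g0)) /= /S mulr_sumr.
  by apply: eq_bigl => x; rewrite hm.
have : (1 - g) * S = 0 by rewrite mulrBl mul1r -eS subrr.
by move/eqP; rewrite mulf_eq0 subr_eq0 eq_sym (negbTE g1) /= => /eqP.
Qed.

Lemma Qcls_system : heffter_system (nzsq F) (v %/ k) Qcls.
Proof.
have kp := k_gt0; split; last first.
  by move=> b /imsetP[s _ ->]; split; [exact: Qblk_card (ltn_ord s) | exact: Qblk_sum].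
apply/and3P; split.
- apply/eqP/setP=> x; apply/bigcupP/idP => [[b /imsetP[s _ ->]]|hx].
    by rewrite inE => /andP[].
  exists (Qblk (Ordinal (ltn_pmod (phi x) kp))); first by apply: imset_f.
  by rewrite inE hx /=.
- apply/trivIsetP => A1 A2 /imsetP[s1 _ ->] /imsetP[s2 _ ->].
  apply: contraR; rewrite -setI_eq0 => /set0Pn[x]; rewrite !inE.
  by case/andP => /andP[_ /eqP <-] /andP[_ /eqP <-].
- apply/negP => /imsetP[s _] e0; have := congr1 (fun A : {set F} => #|A|) e0.
  rewrite /= Qblk_card ?ltn_ord // cards0 => e.
  have := v_gt0 Hiso; have := k_dvd; rewrite dvdn_eq => /eqP; rewrite -e; lia.
Qed.

Lemma idx_lt (j : 'I_(k * n)) : (j %/ k < n)%N.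
Proof. by rewrite ltn_divLR ?k_gt0 // -(mulnC k) ltn_ord. Qed.

Definition idxo (j : 'I_(k * n)) : 'I_n := Ordinal (idx_lt j).

Definition Ccls (j : 'I_(k * n)) : {set {set F}} := cls (idxo j) (j %% k).

Lemma C_sys j : heffter_system (nzsq F) k (Ccls j).
Proof. exact: cls_system (ltn_pmod _ k_gt0). Qed.

Lemma D_pls (i j : 'I_(k * n).+1) (b1 b2 : {set F}) (x y : F) :
  b1 \in add_class Ccls Qcls i -> b2 \in add_class Ccls Qcls j -> x != y ->
  x \in b1 -> y \in b1 -> x \in b2 -> y \in b2 -> i = j /\ b1 = b2.
Proof.
rewrite /add_class.
case: (unliftP ord_max i) => [i'|] ->; case: (unliftP ord_max j) => [j'|] ->.
- move=> /imsetP[c1]; rewrite inE => /andP[hc1 /eqP r1] ->.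
  move=> /imsetP[c2]; rewrite inE => /andP[hc2 /eqP r2] -> xy hx hy hx2 hy2.
  have [ei ec] := mulB_pls hc1 hc2 hx hy hx2 hy2 xy.
  have eij : i' = j'.
    apply/val_inj; rewrite [LHS](divn_eq i' k) [RHS](divn_eq j' k) -r1 -r2 ec.
    by move: (congr1 val ei) => /= ->.
  by subst.
- move=> /imsetP[c1]; rewrite inE => /andP[hc1 _] -> /imsetP[s _ ->] xy hx hy hx2 hy2.
  case: (mulB_Q hc1 hx hy hx2 hy2 xy).
- move=> /imsetP[s _ ->] /imsetP[c1]; rewrite inE => /andP[hc1 _] -> xy hx hy hx2 hy2.
  case: (mulB_Q hc1 hx2 hy2 hx hy xy).
- move=> /imsetP[s1 _ ->] /imsetP[s2 _ ->] xy.
  rewrite !QblkE => /andP[_ /eqP e1] _ /andP[_ /eqP e2] _.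
  have : s1 = s2 by apply/val_inj; rewrite -e1 -e2.
  by move=> ->.
Qed.

Lemma C_pls (i j : 'I_(k * n)) (b1 b2 : {set F}) (x y : F) :
  b1 \in Ccls i -> b2 \in Ccls j -> x != y ->
  x \in b1 -> y \in b1 -> x \in b2 -> y \in b2 -> i = j /\ b1 = b2.
Proof.
move=> h1 h2 xy hx hy hx2 hy2.
have h1' : b1 \in add_class Ccls Qcls (lift ord_max i) by rewrite /add_class liftK.
have h2' : b2 \in add_class Ccls Qcls (lift ord_max j) by rewrite /add_class liftK.
have [e eb] := D_pls h1' h2' xy hx hy hx2 hy2.
by split => //; apply: lift_inj e.
Qed.

Local Close Scope ring_scope.
Lemma main_Q :
  exists C : 'I_(k * n) -> {set {set F}},
    [/\ heffter_config (nzsq F) ((#|F|).-1 %/ 2) k C,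
        ((forall i, simple_block (B i)) ->
           forall j, {in C j, forall b, simple_block b})
      & exists Q : {set {set F}},
          heffter_system (nzsq F) ((#|F|).-1 %/ (2 * k)) Q /\
          heffter_space (nzsq F) (add_class C Q)].
Proof.
have hh := half_nzsq Hiso Hodd Hcard.
exists Ccls; split.
- split; first by rewrite (card_nzsq Hiso) Hcard /= mulKn.
    split => //; last exact: C_pls.
    by move=> j; exists k; apply: C_sys.
  exact: C_sys.
- move=> hs j b /imsetP[c]; rewrite inE => /andP[hc _] ->.
  exact: mulB_simple.
- exists Qcls; split.
    by rewrite Hcard /= divnMl //; apply: Qcls_system.
  split => //; last exact: D_pls.
  move=> j; rewrite /add_class; case: (unliftP ord_max j) => [j'|] _.
    by exists k; apply: C_sys.
  by exists (v %/ k)%N; apply: Qcls_system.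
Qed.

End Q.

Local Close Scope ring_scope.
Unset Implicit Arguments.
Theorem corollary4p4 (F : finFieldType) (v : nat) (phi : F -> nat) (k n : nat)
    (B : 'I_n -> {set F}) :
  #|F| = (2 * v).+1 -> odd v -> sq_iso v phi -> (0 < n)%N ->
  heffter_diff_packing v phi k B ->
  exists C : 'I_(k * n) -> {set {set F}},
    [/\ heffter_config (nzsq F) ((#|F|).-1 %/ 2) k C,
        ((forall i, simple_block (B i)) ->
           forall j, {in C j, forall b, simple_block b})
      & exists Q : {set {set F}},
          heffter_system (nzsq F) ((#|F|).-1 %/ (2 * k)) Q /\
          heffter_space (nzsq F) (add_class C Q)].
Proof.
move=> h1 h2 h3 h4 h5; exact: (main_Q h3 h2 h1 h4 h5).
Qed.
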